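(* Let $G$ be a graph and $s:V(G)\to\mathbb{N}$ a function. Suppose that every correspondence-cover $(L^-,H^-)$ of $G$ with $|L^-(v)|=s(v)$ for all $v\in V(G)$ has a fractional packing. Then every correspondence-cover $(L,H)$ of $G$ with $|L(v)|\geq s(v)$ for all $v$ has a fractional packing. The same statement holds with ''correspondence-cover'' replaced by ''list-cover'' throughout. In particular, every correspondence-cover $(L,H)$ of $G$ with $|L(v)|\ge \chi_c^\bullet(G)$ for all $v$ has a fractional packing.
   Context: All graphs are finite and simple. A correspondence-cover of a graph $G$ is a pair $(L,H)$ where $H$ is a graph and $L$ maps each $v\in V(G)$ to a subset $L(v)\subseteq V(H)$ such that: the sets $L(v)$ partition $V(H)$; each $L(v)$ induces a clique in $H$; if $uv\notin E(G)$ there are no edges of $H$ between $L(u)$ and $L(v)$; if $uv\in E(G)$ the edges of $H$ between $L(u)$ and $L(v)$ form a matching. A list-cover is the correspondence-cover arising from a list-assignment $v\mapsto L(v)\subseteq\mathbb{N}$: vertices $(v,x)$ with $x\in L(v)$, cliques on each list, and edges $(u,x)(v,x)$ for every $uv\in E(G)$ and common color $x$. An independent transversal of $(L,H)$ is an independent set of $H$ containing exactly one vertex of each $L(v)$. A cover has a fractional packing if there is a probability distribution on independent transversals $I$ such that $\Pr(x\in I)=1/|L(v)|$ for every $v$ and every $x\in L(v)$ (lists need not all have the same size). $\chi_c^{\bullet}(G)$ is the least $k\ge1$ such that every correspondence-cover with all lists of size $k$ has a fractional packing. *)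

(* Defs.v *)
From HB Require Import structures.
From mathcomp Require Import all_boot all_order all_algebra.
From mathcomp Require Import reals.
Set Implicit Arguments. Unset Strict Implicit. Unset Printing Implicit Defensive.
Import Order.TTheory GRing.Theory Num.Theory.
Local Open Scope ring_scope.

Definition simple_rel (T : finType) (e : rel T) : Prop :=
  symmetric e /\ irreflexive e.

(* (L, H) is a correspondence-cover of the graph (V, adj); H = (T, h). *)
Definition corr_cover (V T : finType) (adj : rel V) (L : V -> {set T}) (h : rel T) : Prop :=
  simple_rel h /\
  (forall x : T, exists v, x \in L v) /\
  (forall u v (x : T), u != v -> x \in L u -> x \notin L v) /\
  (forall v (x y : T), x \in L v -> y \in L v -> x != y -> h x y) /\
  (forall u v (x y : T), u != v -> ~~ adj u v -> x \in L u -> y \in L v -> ~~ h x y) /\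
  (forall u v (x y y' : T), adj u v -> x \in L u -> y \in L v -> y' \in L v ->
      h x y -> h x y' -> y = y').

Definition indep_transversal (V T : finType) (L : V -> {set T}) (h : rel T) (I : {set T}) : Prop :=
  (forall x y, x \in I -> y \in I -> ~~ h x y) /\ (forall v, #|I :&: L v| = 1%N).

Definition frac_packing (R : realType) (V T : finType) (L : V -> {set T}) (h : rel T) : Prop :=
  exists p : {set T} -> R,
    (forall I, 0 <= p I) /\
    \sum_(I : {set T}) p I = 1 /\
    (forall I, 0 < p I -> indep_transversal L h I) /\
    (forall v x, x \in L v -> \sum_(I : {set T} | x \in I) p I = (#|L v|%:R)^-1).

Definition lc_vert (V : finType) (N : nat) (Lst : V -> {set 'I_N}) : finType :=
  {x : V * 'I_N | x.2 \in Lst x.1}.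

Definition lc_L (V : finType) (N : nat) (Lst : V -> {set 'I_N}) (v : V)
  : {set lc_vert Lst} := [set x : lc_vert Lst | (val x).1 == v].

Definition lc_h (V : finType) (adj : rel V) (N : nat) (Lst : V -> {set 'I_N})
  : rel (lc_vert Lst) :=
  fun x y => (((val x).1 == (val y).1) && (x != y))
             || (adj (val x).1 (val y).1 && ((val x).2 == (val y).2)).

Definition all_k_covers_pack (R : realType) (V : finType) (adj : rel V) (k : nat) : Prop :=
  forall (T : finType) (L : V -> {set T}) (h : rel T),
    corr_cover adj L h -> (forall v, #|L v| = k) -> frac_packing R L h.

Definition is_chi_c_bullet (R : realType) (V : finType) (adj : rel V) (k : nat) : Prop :=
  (1 <= k)%N /\ all_k_covers_pack R adj k /\
  (forall k', (1 <= k')%N -> (k' < k)%N -> ~ all_k_covers_pack R adj k').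

Arguments lc_L {V N} Lst v.
Arguments lc_h {V} adj {N} Lst x y.

(* Main.v *)
Require Import Defs.
From HB Require Import structures.
From mathcomp Require Import all_boot all_order all_algebra.
From mathcomp Require Import reals.
Local Open Scope ring_scope.
From mathcomp Require boolp.
Set Implicit Arguments. Unset Strict Implicit. Unset Printing Implicit Defensive.
Import Order.TTheory GRing.Theory Num.Theory.
Definition rprops (R : realType) (V T : finType) (L : V -> {set T}) (h : rel T)
  (S : {set T}) (p : {set T} -> R) : Prop :=
    (forall I, 0 <= p I) /\
    \sum_(I : {set T}) p I = 1 /\
    (forall I, 0 < p I -> indep_transversal L h I /\ I \subset S) /\
    (forall v x, x \in L v :&: S ->
       \sum_(I : {set T} | x \in I) p I = (#|L v :&: S|%:R)^-1).

Definition rpack (R : realType) (V T : finType) (L : V -> {set T}) (h : rel T)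
  (S : {set T}) : Prop := exists p : {set T} -> R, rprops L h S p.

Lemma sum_pos_ex (R : realType) (I : finType) (P : pred I) (F : I -> R) :
  0 < \sum_(i | P i) F i -> exists2 i, P i & 0 < F i.
Proof.
move=> hs; have [/existsP [i /andP [Pi Fi]]|] := boolP [exists i, P i && (0 < F i)].
  by exists i.
move=> /existsPn hn; exfalso; move: hs; apply/negP; rewrite -leNgt.
apply: sumr_le0 => i Pi; move: (hn i); rewrite Pi /= leNgt.
by [].
Qed.

Lemma rpack_pos (R : realType) (V T : finType) (L : V -> {set T}) h S :
  rpack R L h S -> forall v, (0 < #|L v :&: S|)%N.
Proof.
move=> [p [p0 [p1 [pI _]]]] v.
have : 0 < \sum_(I : {set T} | true) p I by rewrite p1 ltr01.
move=> /sum_pos_ex [I _ /pI [[_ c1] sub]].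
have: (I :&: L v) \subset (L v :&: S).
  apply/subsetP => x; rewrite !inE => /andP [xI ->]; by rewrite (subsetP sub).
move/subset_leq_card; rewrite c1; by [].
Qed.
Lemma transfer (R : realType) (V T T' : finType) (f : T' -> T) (finj : injective f)
  (L : V -> {set T}) (L' : V -> {set T'}) (h : rel T) (h' : rel T') (S : {set T}) :
  (forall x y, h' x y = h (f x) (f y)) ->
  (forall v, f @: L' v = L v :&: S) ->
  (forall x, f x \in S) ->
  frac_packing R L' h' -> rpack R L h S.
Proof.
move=> hh hL hS [q [q0 [q1 [qI qm]]]].
exists (fun I : {set T} => \sum_(I' : {set T'} | f @: I' == I) q I'); split; [|split; [|split]].
- by move=> I; apply: sumr_ge0.
- rewrite -q1 (partition_big (fun I' : {set T'} => f @: I') predT) //=.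
- move=> I /sum_pos_ex [I' /eqP <- /qI [ind c1]]; split; [split|].
  + move=> x y /imsetP [x' x'I ->] /imsetP [y' y'I ->]; rewrite -hh; exact: ind.
  + move=> v.
    have sub : f @: I' \subset S by apply/subsetP => x /imsetP [x' _ ->].
    have -> : f @: I' :&: L v = f @: I' :&: (L v :&: S).
      by rewrite setIA; apply/esym/setIidPl; apply: subset_trans (subsetIl _ _) sub.
    by rewrite -hL -imsetI ?card_imset // => a b _ _; apply: finj.
  + by apply/subsetP => x /imsetP [x' _ ->].
- move=> v x xin.
  have : x \in f @: L' v by rewrite hL.
  move=> /imsetP [x' x'L ->].
  rewrite -hL card_imset // -(qm v x' x'L).
  rewrite [RHS](@partition_big _ _ _ _ _ _ (fun I' : {set T'} => x' \in I') (fun I' => f @: I') (fun I => f x' \in I)) /=; last first.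
    by move=> I' xI'; apply: imset_f.
  apply: eq_bigr => I xI; apply: eq_bigl => I'.
  case: eqP => [eI|]; rewrite ?andbF //.
  by rewrite -eI mem_imset // in xI; rewrite xI.
Qed.
Lemma reduce (R : realType) (V T : finType) (L : V -> {set T}) (h : rel T) (s : V -> nat)
  (disj : forall u v x, u != v -> x \in L u -> x \notin L v)
  (base : forall S, (forall v, #|L v :&: S| = s v) -> rpack R L h S) :
  forall S, (forall v, s v <= #|L v :&: S|)%N -> rpack R L h S.
Proof.
move=> S; have [n] := ubnP #|S|; elim: n S => // n IH S ltS hs.
have [/forallP heq|] := boolP [forall v, #|L v :&: S| == s v].
  by apply: base => v; apply/eqP.
move=> /forallPn [v0 nv0].
have lt0 : (s v0 < #|L v0 :&: S|)%N by rewrite ltn_neqAle eq_sym nv0 hs.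
set A := L v0 :&: S in lt0 *.
set n0 := #|A| in lt0 *.
have n0pos : (0 < n0)%N by apply: leq_ltn_trans lt0.
have xAL x0 : x0 \in A -> x0 \in L v0 by rewrite inE => /andP [].
have xAS x0 : x0 \in A -> x0 \in S by rewrite inE => /andP [].
have cardA x0 : x0 \in A -> #|L v0 :&: (S :\ x0)| = n0.-1.
  move=> xA; rewrite /n0 (cardsD1 x0 A) xA /=.
  rewrite add0n; apply: eq_card => y; rewrite !inE.
  by case: (y == x0); rewrite ?andbF.
have cardB x0 v : x0 \in A -> v != v0 -> L v :&: (S :\ x0) = L v :&: S.
  move=> xA nv; apply/setP => y; rewrite !inE.
  case: (eqVneq y x0) => [->|] //=.
  by rewrite (negbTE (disj v0 v x0 _ (xAL _ xA))) // eq_sym.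
have IHx x0 : exists p : {set T} -> R, x0 \in A -> rprops L h (S :\ x0) p.
  case xA : (x0 \in A); last by exists (fun _ => 0).
  have [p hp] : rpack R L h (S :\ x0).
    apply: IH.
      by move: ltS; rewrite (cardsD1 x0 S) xAS.
    move=> v; case: (eqVneq v v0) => [->|nv].
      by rewrite cardA // -ltnS prednK.
    by rewrite cardB.
  by exists p.
have [pf hpf] := boolp.choice IHx.
have n0R : (n0%:R : R) != 0 by rewrite pnatr_eq0 -lt0n.
exists (fun I => n0%:R^-1 * \sum_(x0 in A) pf x0 I); split; [|split; [|split]].
- move=> I; apply: mulr_ge0; first by rewrite invr_ge0 ler0n.
  by apply: sumr_ge0 => x0 xA; case: (hpf x0 xA).
- rewrite -big_distrr /= exchange_big /=.
  rewrite (eq_bigr (fun _ => 1)); last by move=> x0 xA; case: (hpf x0 xA) => _ [].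
  by rewrite sumr_const -mulr_natr mul1r mulVf.
- move=> I; rewrite pmulr_rgt0; last by rewrite invr_gt0 ltr0n.
  move=> /sum_pos_ex [x0 xA /(proj1 (proj2 (proj2 (hpf x0 xA))))] [ti sub].
  split=> //; apply: subset_trans sub _; exact: subsetDl.
- move=> v x xin.
  have xS : x \in S by move: xin; rewrite inE => /andP[].
  have xL : x \in L v by move: xin; rewrite inE => /andP[].
  have F0 : x \in A -> \sum_(I : {set T} | x \in I) pf x I = 0.
    move=> xA; case: (hpf x xA) => p0 [_ [pI _]].
    apply: big1 => I xI; apply/eqP; rewrite eq_le p0 andbT leNgt.
    by apply/negP => /pI [_ /subsetP /(_ x xI)]; rewrite !inE eqxx.
  have F1 x0 : x0 \in A -> x0 != x ->
      \sum_(I : {set T} | x \in I) pf x0 I = (#|L v :&: (S :\ x0)|%:R)^-1.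
    move=> xA nx; case: (hpf x0 xA) => _ [_ [_ pm]]; apply: pm.
    by rewrite !inE xL xS eq_sym nx.
  rewrite -big_distrr /= exchange_big /=.
  case: (eqVneq v v0) => [ev|nv].
    subst v.
    have xA : x \in A by [].
    rewrite (bigD1 x) //= F0 // add0r.
    rewrite (eq_bigr (fun _ => (n0.-1%:R)^-1)); last first.
      by move=> x0 /andP [xA0 nx]; rewrite F1 // cardA.
    have -> : \sum_(i in A | i != x) (n0.-1%:R : R)^-1
              = \sum_(i in A :\ x) (n0.-1%:R)^-1.
      by apply: eq_bigl => i; rewrite !inE andbC.
    rewrite sumr_const.
    have cx : #|A :\ x| = n0.-1 by rewrite /n0 (cardsD1 x A) xA.
    have pos : (0 < n0.-1)%N.
      rewrite -(cardA x xA); apply: (rpack_pos (ex_intro _ (pf x) (hpf x xA))).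
    by rewrite cx -[_ *+ n0.-1]mulr_natr mulVf ?mulr1 // pnatr_eq0 -lt0n.
  rewrite (eq_bigr (fun _ => (#|L v :&: S|%:R)^-1)); last first.
    move=> x0 xA; rewrite F1 ?cardB //.
    have nv' : v0 != v by rewrite eq_sym.
    apply/eqP => e; move: (disj v0 v x0 nv' (xAL _ xA)); by rewrite e xL.
  by rewrite sumr_const -[_ *+ #|A|]mulr_natr mulrCA mulVf ?mulr1.
Qed.
Lemma rpack_setT (R : realType) (V T : finType) (L : V -> {set T}) (h : rel T) :
  rpack R L h setT -> frac_packing R L h.
Proof.
move=> [p [p0 [p1 [pI pm]]]]; exists p; split; [|split; [|split]] => //.
- by move=> I /pI [].
- by move=> v x xL; rewrite -(setIT (L v)); apply: pm; rewrite setIT.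
Qed.

Lemma part1 (R : realType) (V : finType) (adj : rel V) (s : V -> nat) :
  (forall (T : finType) (L : V -> {set T}) (h : rel T),
       corr_cover adj L h -> (forall v, #|L v| = s v) -> frac_packing R L h) ->
   forall (T : finType) (L : V -> {set T}) (h : rel T),
       corr_cover adj L h -> (forall v, (s v <= #|L v|)%N) -> frac_packing R L h.
Proof.
move=> H1 T L h cc hs.
have [[hsym hirr] [hcov [hdisj [hcl [hnadj hmat]]]]] := cc.
apply: rpack_setT.
apply: (reduce (s:=s) hdisj) => [S hS|v]; last by rewrite setIT.
pose T' := {x : T | x \in S}.
pose L' := fun v => [set y : T' | val y \in L v].
pose h' := fun x y : T' => h (val x) (val y).
have hL : forall v, val @: L' v = L v :&: S.
  move=> v; apply/setP => x; rewrite inE; apply/imsetP/andP.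
    by move=> [y]; rewrite inE => yL ->; split => //; exact: valP.
  by move=> [xL xS]; exists (exist _ x xS); rewrite ?inE.
apply: (@transfer R V T T' val val_inj L L' h h' S) => //.
  by move=> x; exact: valP.
apply: H1; last first.
  by move=> v; rewrite -hS -hL card_imset //; exact: val_inj.
split; [split|split; [|split; [|split; [|split]]]].
- by move=> x y; rewrite /h' hsym.
- by move=> x; rewrite /h' hirr.
- by move=> y; have [v yv] := hcov (val y); exists v; rewrite inE.
- by move=> u v x nuv; rewrite !inE; exact: hdisj.
- by move=> v x y; rewrite !inE => xL yL nxy; apply: (hcl v) => //; rewrite val_eqE.
- by move=> u v x y nuv na; rewrite !inE; exact: hnadj.
- move=> u v x y y' a; rewrite !inE => xL yL y'L hy hy'.
  apply: val_inj; exact: (hmat u v _ _ _ a xL yL y'L hy hy').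
Qed.
Definition sub_lst (V : finType) (N : nat) (Lst : V -> {set 'I_N})
  (S : {set lc_vert Lst}) (v : V) : {set 'I_N} :=
  [set (val x).2 | x in lc_L Lst v :&: S].

Lemma sub_lstP (V : finType) (N : nat) (Lst : V -> {set 'I_N}) (S : {set lc_vert Lst})
  (y : lc_vert (sub_lst S)) : (val y).2 \in Lst (val y).1.
Proof.
have := valP y; rewrite /sub_lst => /imsetP [x]; rewrite !inE => /andP [/eqP xv _] ->.
rewrite -xv; exact: (valP x).
Qed.

Definition lc_inj (V : finType) (N : nat) (Lst : V -> {set 'I_N}) (S : {set lc_vert Lst})
  (y : lc_vert (sub_lst S)) : lc_vert Lst := exist _ (val y) (sub_lstP y).

Lemma pair_eq2 (A B : Type) (p q : A * B) : p.1 = q.1 -> p.2 = q.2 -> p = q.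
Proof. by case: p q => [? ?] [? ?] /= -> ->. Qed.

Lemma part2 (R : realType) (V : finType) (adj : rel V) (s : V -> nat) :
  (forall (N : nat) (Lst : V -> {set 'I_N}),
       (forall v, #|Lst v| = s v) -> frac_packing R (lc_L Lst) (lc_h adj Lst)) ->
   forall (N : nat) (Lst : V -> {set 'I_N}),
       (forall v, (s v <= #|Lst v|)%N) -> frac_packing R (lc_L Lst) (lc_h adj Lst).
Proof.
move=> H2 N Lst hs; apply: rpack_setT.
have disj u v x : u != v -> x \in lc_L Lst u -> x \notin lc_L Lst v.
  by move=> nuv; rewrite !inE => /eqP ->.
have injL (W : {set lc_vert Lst}) v :
    {in lc_L Lst v :&: W &, injective (fun x : lc_vert Lst => (val x).2)}.
  move=> x x'; rewrite !inE => /andP [/eqP xv _] /andP [/eqP x'v _] e.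
  by apply: val_inj; apply: pair_eq2 => //; rewrite xv x'v.
apply: (reduce (s:=s) disj) => [S hS|v]; last first.
  rewrite -(card_in_imset (@injL setT v)); apply: leq_trans (hs v) _; apply: subset_leq_card.
  apply/subsetP => c cin; apply/imsetP; exists (exist _ (v, c) cin) => //.
  by rewrite /lc_L !inE /= eqxx.
pose f := @lc_inj V N Lst S.
have finj : injective f.
  by move=> y z /(congr1 val) /= e; apply: val_inj.
have fS y : f y \in S.
  have := valP y; rewrite /sub_lst => /imsetP [x]; rewrite !inE => /andP [/eqP xv xS] e.
  suff -> : f y = x by [].
  by apply: val_inj; apply: pair_eq2 => //=; rewrite xv.
have hL v : f @: lc_L (sub_lst S) v = lc_L Lst v :&: S.
  apply/setP => x; rewrite inE; apply/imsetP/andP.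
    move=> [y]; rewrite /lc_L inE => yv ->; split => //.
    by rewrite /lc_L inE.
  move=> [xv xS].
  have P : (val x).2 \in sub_lst S (val x).1.
    by apply: imset_f; rewrite !inE eqxx xS.
  exists (exist _ (val x) P); first by move: xv; rewrite /lc_L !inE.
  by apply: val_inj.
apply: (@transfer R V _ _ f finj (lc_L Lst) (lc_L (sub_lst S)) (lc_h adj Lst) (lc_h adj (sub_lst S)) S) => //.
- apply: H2 => v; rewrite -hS /sub_lst card_in_imset //; exact: injL.
Qed.

Theorem mainTheorem10 (R : realType) (V : finType) (adj : rel V)
    (adj_sym : symmetric adj) (adj_irr : irreflexive adj) (s : V -> nat) :
  ((forall (T : finType) (L : V -> {set T}) (h : rel T),
       corr_cover adj L h -> (forall v, #|L v| = s v) -> frac_packing R L h) ->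
   forall (T : finType) (L : V -> {set T}) (h : rel T),
       corr_cover adj L h -> (forall v, (s v <= #|L v|)%N) -> frac_packing R L h)
  /\
  ((forall (N : nat) (Lst : V -> {set 'I_N}),
       (forall v, #|Lst v| = s v) -> frac_packing R (lc_L Lst) (lc_h adj Lst)) ->
   forall (N : nat) (Lst : V -> {set 'I_N}),
       (forall v, (s v <= #|Lst v|)%N) -> frac_packing R (lc_L Lst) (lc_h adj Lst))
  /\
  (forall k : nat, is_chi_c_bullet R adj k ->
   forall (T : finType) (L : V -> {set T}) (h : rel T),
       corr_cover adj L h -> (forall v, (k <= #|L v|)%N) -> frac_packing R L h).
Proof.
split; first exact: part1.
split; first exact: part2.
move=> k [_ [hk _]] T L h cc hL.
exact: (@part1 R V adj (fun _ => k) hk T L h cc hL).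
Qed.
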